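(* There is a functor $E:\mathbf{FinGraph}^<_\star\to\mathbf{FinLoset}$ that linearly orders the vertices of a given graph according to the ordering on the neighborhood of its distinguished point: for $G$ with distinguished point $v_0$, $E(G)$ is the set $\{v_0\}\cup\{u : v_0\to u\}$ with $v_0$ least and, for $u,v\neq v_0$, $u<v$ iff $v_0\to u\triangleleft v_0\to v$; and for a morphism $h$, $E(h)(v)=h(v)$.
   Context: A (directed) graph is $(V,\to)$ with $\to\subseteq V\times V$; $N(u)$ is the set of outgoing edges of $u$. A pointed graph has a distinguished vertex $v_0$; connected means every vertex is reachable by a path from $v_0$. A finite edge-ordered graph is a finite graph with a strict linear order $\triangleleft$ on each neighborhood. A homomorphism of finite pointed edge-ordered graphs $h:G\to H$ is a vertex map with (i) $u\to v$ implies $h(u)\to h(v)$; (ii) the distinguished vertex of $G$ is the unique vertex mapped to the distinguished vertex of $H$; (iii) $u\to v_1\triangleleft u\to v_2$ implies $h(u)\to h(v_1)\triangleleft h(u)\to h(v_2)$. $\mathbf{FinGraph}^<_\star$ is the category of connected, finite, pointed, edge-ordered graphs with such homomorphisms; $\mathbf{FinLoset}$ is the category of finite linearly ordered sets with monotone functions. *)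

(* Defs.v *)
From mathcomp Require Import all_boot.
Set Implicit Arguments. Unset Strict Implicit. Unset Printing Implicit Defensive.

(* A finite pointed graph with an ordering on each neighbourhood:
   [eord u v1 v2] means  (u -> v1) <| (u -> v2). *)
Record pegraph := FGraph {
  vert : finType;
  edge : rel vert;
  eord : vert -> rel vert;
  root : vert }.

Definition edge_ordered (G : pegraph) : Prop :=
  forall u : vert G,
    (forall v1 v2, eord u v1 v2 -> edge u v1 && edge u v2) /\
    (forall v, ~~ eord u v v) /\
    (forall v1 v2 v3, eord u v1 v2 -> eord u v2 v3 -> eord u v1 v3) /\
    (forall v1 v2, edge u v1 -> edge u v2 -> v1 != v2 ->
        eord u v1 v2 || eord u v2 v1).

Definition connected_pt (G : pegraph) : Prop :=
  forall v : vert G, connect (@edge G) (root G) v.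

Definition is_obj (G : pegraph) : Prop := edge_ordered G /\ connected_pt G.

Definition is_hom (G H : pegraph) (h : vert G -> vert H) : Prop :=
  (forall u v, edge u v -> edge (h u) (h v)) /\
  (forall v, h v = root H <-> v = root G) /\
  (forall u v1 v2, edge u v1 -> edge u v2 -> eord u v1 v2 ->
      eord (h u) (h v1) (h v2)).

Definition Eset (G : pegraph) : pred (vert G) :=
  fun v => (v == root G) || edge (root G) v.

Definition Elt (G : pegraph) (u v : vert G) : bool :=
  ((u == root G) && (v != root G)) ||
  [&& u != root G, v != root G & eord (root G) u v].

Definition Ele (G : pegraph) (u v : vert G) : bool := (u == v) || Elt u v.
Arguments Eset G _ : clear implicits.

(* Main.v *)
Require Import Defs.
From mathcomp Require Import all_boot.

Theorem lemma9p3 :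
  (* object part: E(G) is a finite linearly ordered set *)
  (forall G : pegraph, is_obj G ->
     {in Eset G, forall x, ~~ Elt x x} /\
     {in Eset G & &, forall x y z, Elt x y -> Elt y z -> Elt x z} /\
     {in Eset G &, forall x y, x != y -> Elt x y || Elt y x}) /\
  (* morphism part: E(h) = h restricted to E(G) is a well-defined monotone map *)
  (forall (G H : pegraph) (h : vert G -> vert H),
     is_obj G -> is_obj H -> is_hom h ->
     {in Eset G, forall x, h x \in Eset H} /\
     {in Eset G &, forall x y, Ele x y -> Ele (h x) (h y)}).
Proof.
split.
  move=> G [eo _]; have [Hin [Hirr [Htr Htot]]] := eo (Defs.root G).
  split; [|split].
  - move=> x _; rewrite /Elt negb_or; apply/andP; split.
      by case: eqP.
    by rewrite (negbTE (Hirr x)) !andbF.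
  - move=> x y z _ _ _; rewrite /Elt.
    case: (x =P Defs.root G) => [->|nx]; case: (y =P Defs.root G) => [->|ny];
      case: (z =P Defs.root G) => [->|nz] //=.
    exact: Htr.
  - move=> x y; rewrite !unfold_in /Eset /Elt => Hx Hy nxy.
    have [ex|nx] := boolP (x == Defs.root G); have [ey|ny] := boolP (y == Defs.root G).
    + by move: nxy; rewrite (eqP ex) (eqP ey) eqxx.
    + by [].
    + by [].
    + rewrite (negbTE nx) (negbTE ny) /= in Hx Hy *.
      by rewrite (Htot _ _ Hx Hy nxy).
move=> G H h [eoG _] _ [he [hr ho]].
have hroot : h (Defs.root G) = Defs.root H by apply/hr.
have hnr : forall v, v != Defs.root G -> h v != Defs.root H.
  by move=> v nv; apply/eqP => /hr /eqP; rewrite (negbTE nv).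
split.
  move=> x; rewrite !unfold_in /Eset.
  case/orP => [/eqP ->|e]; first by rewrite hroot eqxx.
  by rewrite -hroot he ?orbT.
move=> x y _ _; rewrite /Ele /Elt.
case/orP => [/eqP ->|]; first by rewrite eqxx.
case/orP.
  case/andP => /eqP -> ny.
  by rewrite hroot eqxx /= hnr ?orbT.
case/and3P => nx ny o.
have [Hin _] := eoG (Defs.root G).
have /andP [e1 e2] := Hin _ _ o.
have o' := ho _ _ _ e1 e2 o; rewrite hroot in o'.
by rewrite o' !hnr // !orbT.
Qed.
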